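(* Let $\Gamma=(N,A,u)$ be a finite game with a unique correlated equilibrium $q^*$. Then $\mathcal{I}=\mathcal{I}_{q^*}=\{\mu\in\Delta A:\mathrm{supp}(\mu)\subseteq\mathrm{supp}(q^* ),\ \mathbb{E}_\mu[\log q^*]=\mathbb{E}_{q^*}[\log q^*]\}$; equivalently (given that $\mathcal{I}$ is the set of directly implementable outcomes), $\mu$ is directly implementable if and only if $\mathrm{supp}(\mu)\subseteq\mathrm{supp}(q^* )$ and $\mathbb{E}_\mu[\log q^*]=\mathbb{E}_{q^*}[\log q^*]$.
   Context: A finite game has finite player set $N$, finite action sets $A_i$, $A=\times_iA_i$, utilities $u_i:A\to\mathbb{R}$. $\mathrm{CE}(\Gamma)$ is the set of correlated equilibria: $p\in\Delta A$ such that for all $i$, all $a_i$ with $\sum_{a_{-i}}p_{a_i,a_{-i}}>0$, all $b\in A_i$, $\sum_{a_{-i}}p_{a_i,a_{-i}}[u_i(a_i,a_{-i})-u_i(b,a_{-i})]\ge0$. For $q\in\Delta A$, $\mathcal{I}_q=\{\mu\in\Delta A:\mathrm{supp}(\mu)\subseteq\mathrm{supp}(q),\ \mathbb{E}_\mu[\log q]=\mathbb{E}_q[\log q]\}$ and $\mathcal{I}=\bigcup_{q\in\mathrm{CE}(\Gamma)}\mathcal{I}_q$ (convention $0\log 0=0$). Direct implementability: with a partially specified data-generating process $(M,\eta,\mathcal{F})$, $M=A$, $\eta\in\Delta A$, $\mathcal{F}\subseteq\{f:A\to\mathbb{R}\}$, the belief $q$ is the unique maximizer of $-\sum_aq_a\log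 q_a$ over $\{q\in\Delta A:\sum_aq_af(a)=\sum_a\eta_af(a)\ \forall f\in\mathcal{F}\}$; $\mu$ is directly implementable if for some such process with $\eta=\mu$ the obedience conditions $\sum_{a_{-i}}q_{a_i,a_{-i}}[u_i(a_i,a_{-i})-u_i(b,a_{-i})]\ge0$ hold for all $i$, all $a_i$ with positive $q$-marginal, all $b\in A_i$. *)

(* Defs.v *)
From HB Require Import structures.
From mathcomp Require Import all_boot all_order all_algebra.
From mathcomp Require Import all_classical all_reals exp.
Set Implicit Arguments. Unset Strict Implicit. Unset Printing Implicit Defensive.
Import Order.TTheory GRing.Theory Num.Theory.
Local Open Scope ring_scope.

Section Game.
Variables (R : realType) (N : finType) (Act : N -> finType).

Definition profile := {dffun forall i : N, Act i}.

Definition dev (a : profile) (i : N) (b : Act i) : profile :=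
  [ffun j => @dfwith N (fun k => Act k) (fun k => a k) i b j].

Definition is_dist (p : {ffun profile -> R}) : Prop :=
  (forall a, 0 <= p a) /\ \sum_a p a = 1.

Definition obedient (u : N -> profile -> R) (p : {ffun profile -> R}) : Prop :=
  forall (i : N) (ai : Act i),
    0 < \sum_(a : profile | a i == ai) p a ->
    forall b : Act i,
      0 <= \sum_(a : profile | a i == ai) p a * (u i a - u i (dev a b)).

Definition CE (u : N -> profile -> R) (p : {ffun profile -> R}) : Prop :=
  is_dist p /\ obedient u p.

(* x log y with the convention 0 log 0 = 0 (log 0 is taken to be 0) *)
Definition logc (y : R) : R := if y == 0 then 0 else ln y.

Definition Elog (mu q : {ffun profile -> R}) : R := \sum_a mu a * logc (q a).

Definition supp_sub (mu q : {ffun profile -> R}) : Prop :=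
  forall a, mu a != 0 -> q a != 0.

Definition Iq (q mu : {ffun profile -> R}) : Prop :=
  is_dist mu /\ supp_sub mu q /\ Elog mu q = Elog q q.

Definition Iset (u : N -> profile -> R) (mu : {ffun profile -> R}) : Prop :=
  exists q, CE u q /\ Iq q mu.

Definition entropy (q : {ffun profile -> R}) : R := - Elog q q.

Definition feasible (eta : {ffun profile -> R}) (F : (profile -> R) -> Prop)
    (q : {ffun profile -> R}) : Prop :=
  is_dist q /\ forall f, F f -> \sum_a q a * f a = \sum_a eta a * f a.

Definition maxent_belief (eta : {ffun profile -> R}) (F : (profile -> R) -> Prop)
    (q : {ffun profile -> R}) : Prop :=
  feasible eta F q /\
  forall q', feasible eta F q' -> q' != q -> entropy q' < entropy q.

(* direct implementability of mu (process (M, eta, F) with M = A, eta = mu) *)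
Definition directly_implementable (u : N -> profile -> R)
    (mu : {ffun profile -> R}) : Prop :=
  is_dist mu /\
  exists (F : (profile -> R) -> Prop) (q : {ffun profile -> R}),
    maxent_belief mu F q /\ obedient u q.

End Game.

(* Main.v *)
Require Import Defs.
From HB Require Import structures.
From mathcomp Require Import all_boot all_order all_algebra.
From mathcomp Require Import all_classical all_reals exp.
From mathcomp Require Import sequences ring lra.
Set Implicit Arguments. Unset Strict Implicit. Unset Printing Implicit Defensive.
Import Order.TTheory GRing.Theory Num.Theory.
Local Open Scope ring_scope.

Section Aux.
Variable R : realType.

Lemma ln_le1 (z : R) : 0 < z -> ln z <= z - 1.
Proof. move=> z0; have := expR_ge1Dx (ln z); rewrite lnK ?posrE //; lra. Qed.

Lemma ln_lt1 (z : R) : 0 < z -> z != 1 -> ln z < z - 1.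
Proof.
move=> z0 z1; have : ln z != 0 by rewrite ln_eq0.
move/expR_gt1Dx; rewrite lnK ?posrE //; lra.
Qed.

Definition phi (z : R) := - (z * logc z).

Lemma logc0 : logc (0:R) = 0. Proof. by rewrite /logc eqxx. Qed.
Lemma logcE (z : R) : z != 0 -> logc z = ln z. Proof. by rewrite /logc => /negPf ->. Qed.

Lemma L1 (y z : R) : 0 < y -> 0 <= z ->
  phi y - (ln y + 1) * (z - y) - (z - y) ^+ 2 / y <= phi z.
Proof.
move=> y0; rewrite le0r => /orP [/eqP -> | z0].
  rewrite /phi logc0 logcE ?gt_eqF //.
  have -> : - (y * ln y) - (ln y + 1) * (0 - y) - (0 - y) ^+ 2 / y = 0.
    by field; rewrite gt_eqF.
  lra.
rewrite /phi !logcE ?gt_eqF //.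
have h : ln (z / y) <= z / y - 1 by apply: ln_le1; rewrite divr_gt0.
rewrite ln_div ?posrE // in h.
have h2 : z * (ln z - ln y) <= z * (z / y - 1) by apply: ler_wpM2l; [exact: ltW | lra].
have e : (z - y) ^+ 2 / y = z * (z / y - 1) - (z - y) by field; rewrite gt_eqF.
rewrite e. lra.
Qed.

Lemma G (x y : R) : 0 <= x -> 0 <= y -> (x != 0 -> y != 0) ->
  x * (logc y - logc x) <= y - x /\ (x != y -> x * (logc y - logc x) < y - x).
Proof.
move=> x0 y0 hxy; case: (eqVneq x 0) => [-> | xn0].
  rewrite mul0r subr0; split => // ne; rewrite lt0r; apply/andP; split => //.
  by rewrite eq_sym.
have xp : 0 < x by rewrite lt0r xn0.
have yp : 0 < y by rewrite lt0r hxy.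
rewrite (logcE xn0) (logcE (lt0r_neq0 yp)) -ln_div ?posrE //.
have e : y - x = x * (y / x - 1) by field.
rewrite e; split.
  by apply: ler_wpM2l; [exact: ltW | apply: ln_le1; rewrite divr_gt0].
move=> ne; rewrite ltr_pM2l // ln_lt1 ?divr_gt0 //.
by apply: contra ne => /eqP h; apply/eqP; rewrite -[y](divfK xn0) h mul1r.
Qed.

Section Game.
Variables (N : finType) (Act : N -> finType).
Local Notation P := (profile Act).
Local Notation FF := {ffun P -> R}.

Lemma entropyE (q : FF) : entropy q = \sum_a phi (q a).
Proof. by rewrite /entropy /Elog -sumrN. Qed.

Lemma dist_le1 (mu : FF) a : is_dist mu -> mu a <= 1.
Proof.
move=> [h0 h1]; rewrite -h1 (bigD1 a) //= lerDl; exact: sumr_ge0.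
Qed.

Definition rline (q mu : FF) (t : R) : FF := [ffun b => q b + t * (mu b - q b)].

Lemma sum_rline (q mu : FF) t (f : P -> R) :
  \sum_a rline q mu t a * f a = \sum_a q a * f a + t * (\sum_a mu a * f a - \sum_a q a * f a).
Proof.
rewrite -sumrB mulr_sumr -big_split /=; apply: eq_bigr => a _; rewrite ffunE; ring.
Qed.

Lemma line_feasible (mu q : FF) F t : is_dist mu -> feasible mu F q ->
  (forall b, 0 <= rline q mu t b) -> feasible mu F (rline q mu t).
Proof.
move=> [m0 m1] [[q0 q1] hF] hr; split; last first.
  by move=> f Ff; rewrite sum_rline hF // subrr mulr0 addr0.
split => //.
have := sum_rline q mu t (fun _ => 1).
under eq_bigr do rewrite mulr1. under [X in _ = X + _ -> _]eq_bigr do rewrite mulr1.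
under [X in _ = _ + _ * (X - _) -> _]eq_bigr do rewrite mulr1.
under [X in _ = _ + _ * (_ - X) -> _]eq_bigr do rewrite mulr1.
by rewrite m1 q1 subrr mulr0 addr0.
Qed.

Definition gterm (q mu : FF) t b :=
  if q b == 0 then t * mu b + phi (t * mu b) else - (t ^+ 2 * ((mu b - q b) ^+ 2 / q b)).

Lemma pointwise (q mu : FF) t b : 0 <= q b -> 0 <= rline q mu t b ->
  phi (q b) + t * (q b * logc (q b) - mu b * logc (q b)) - t * (mu b - q b)
    + gterm q mu t b <= phi (rline q mu t b).
Proof.
rewrite /gterm ffunE => q0 r0; case: eqP => [e | /eqP ne].
  rewrite e /phi logc0 !(mul0r, mulr0, subr0, add0r, subr0, oppr0, addr0) /=; lra.
have qp : 0 < q b by rewrite lt0r ne.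
have := L1 qp r0; rewrite (logcE ne).
have -> : q b + t * (mu b - q b) - q b = t * (mu b - q b) by ring.
move=> h; apply: le_trans h; rewrite exprMn; lra.
Qed.

Lemma line_bound (q mu : FF) t : is_dist q -> (forall b, 0 <= rline q mu t b) ->
  is_dist mu ->
  t * (Elog q q - Elog mu q) + \sum_b gterm q mu t b <=
  entropy (rline q mu t) - entropy q.
Proof.
move=> [q0 q1] r0 [m0 m1].
rewrite !entropyE lerBrDr.
have : \sum_b (phi (q b) + t * (q b * logc (q b) - mu b * logc (q b)) - t * (mu b - q b)
    + gterm q mu t b) <= \sum_b phi (rline q mu t b).
  by apply: ler_sum => b _; apply: pointwise.
rewrite !big_split /=.
have e1 : \sum_i - (t * (mu i - q i)) = 0 by rewrite sumrN -mulr_sumr sumrB m1 q1 subrr mulr0 oppr0.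
have e2 : \sum_i t * (q i * logc (q i) - mu i * logc (q i)) = t * (Elog q q - Elog mu q) by rewrite -mulr_sumr sumrB.
rewrite e1 e2; lra.
Qed.

Lemma strict_line (mu q : FF) F : is_dist mu -> maxent_belief mu F q ->
  forall t, (forall b, 0 <= rline q mu t b) -> rline q mu t != q ->
  entropy (rline q mu t) < entropy q.
Proof.
move=> dm [fq hs] t r0 ne; apply: hs => //; exact: line_feasible.
Qed.

Lemma supp_part (mu q : FF) F : is_dist mu -> maxent_belief mu F q -> supp_sub mu q.
Proof.
move=> dm me; have [[[q0 q1] _] _] := me; have [m0 m1] := dm.
move=> a mua; apply/negP => /eqP qa.
pose m := \sum_b (if q b == 0 then mu b else 0).
pose c := fun b => if q b == 0 then 0 else (mu b - q b) ^+ 2 / q b.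
pose C := \sum_b c b.
pose L := \sum_b (if q b == 0 then mu b * logc (mu b) else 0).
pose K := Elog q q - Elog mu q.
pose B := K - C - L.
pose t := expR (- ((`|B| + 1) / m)).
have mua0 : 0 < mu a by rewrite lt0r mua m0.
have mb0 : forall b, 0 <= (if q b == 0 then mu b else 0) by move=> b; case: ifP.
have mp : 0 < m.
  rewrite /m (bigD1 a) //= qa eqxx; apply: ltr_pwDl => //; exact: sumr_ge0.
have t0 : 0 < t by exact: expR_gt0.
have t1 : t <= 1.
  rewrite expR_le1 oppr_le0; apply: divr_ge0 => //; [| exact: ltW].
  by apply: addr_ge0.
have lnt : ln t = - ((`|B| + 1) / m) by rewrite /t expRK.
have c0 : forall b, 0 <= c b.
  move=> b; rewrite /c; case: ifP => // _; apply: divr_ge0; [exact: sqr_ge0 | exact: q0].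
have r0 : forall b, 0 <= rline q mu t b.
  move=> b; rewrite ffunE.
  have -> : q b + t * (mu b - q b) = (1 - t) * q b + t * mu b by ring.
  apply: addr_ge0; apply: mulr_ge0 => //; [lra | exact: ltW].
have rne : rline q mu t != q.
  apply/negP => /eqP eq; move: (congr1 (fun f : FF => f a) eq); rewrite ffunE qa.
  rewrite add0r subr0 => /eqP; rewrite mulf_eq0 (negPf mua) orbF; apply/negP.
  by rewrite gt_eqF.
have hs := strict_line dm me r0 rne.
have hb := line_bound (conj q0 q1) r0 dm.
have pw : forall b, t * (- c b - ln t * (if q b == 0 then mu b else 0)
                         - (if q b == 0 then mu b * logc (mu b) else 0))
                    <= gterm q mu t b.
  move=> b; rewrite /gterm /c; case: eqP => qb.
    case: (eqVneq (mu b) 0) => [-> | mb].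
      by rewrite /phi !(mulr0, mul0r, logc0, oppr0, subr0).
    have mbp : 0 < mu b by rewrite lt0r mb m0.
    have tm : t * mu b != 0 by rewrite mulf_neq0 // gt_eqF.
    rewrite /phi (logcE tm) lnM ?posrE // (logcE mb).
    have : 0 <= t * mu b by apply: mulr_ge0; [exact: ltW | exact: ltW].
    set x := ln t; set y := ln (mu b); move=> h. 
    have -> : t * (- 0 - x * mu b - mu b * y) = - (t * mu b * (x + y)) by ring.
    lra.
  have cb := c0 b; rewrite /c in cb; move/eqP/negPf: qb => qb; rewrite qb in cb *.
  rewrite mulr0 !subr0.
  set z := (mu b - q b) ^+ 2 / q b in cb *.
  have : t ^+ 2 * z <= t * z.
    have h1 : 0 <= t * z by apply: mulr_ge0 => //; exact: ltW.
    have h2 : 0 <= (t * z) * (1 - t) by apply: mulr_ge0 => //; lra.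
    rewrite expr2; nra.
  lra.
have sg : t * (- C - ln t * m - L) <= \sum_b gterm q mu t b.
  apply: le_trans (ler_sum _ (fun b _ => pw b)).
  rewrite -mulr_sumr !sumrB -mulr_sumr sumrN; exact: lexx.
have hm : ln t * m = - (`|B| + 1) by rewrite lnt mulNr divfK ?gt_eqF.
have : t * K + t * (- C - ln t * m - L) <= entropy (rline q mu t) - entropy q.
  apply: le_trans hb; rewrite /K; lra.
have -> : t * K + t * (- C - ln t * m - L) = t * (B + `|B| + 1) by rewrite hm /B; ring.
have : 0 < t * (B + `|B| + 1).
  apply: mulr_gt0 => //; have := ler_norm (- B); rewrite normrN; lra.
lra.
Qed.

Lemma elog_part (mu q : FF) F : is_dist mu -> maxent_belief mu F q ->
  Elog mu q = Elog q q.
Proof.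
move=> dm me; have sp := supp_part dm me.
have [[[q0 q1] _] _] := me; have [m0 m1] := dm.
pose K := Elog q q - Elog mu q.
apply/eqP; rewrite eq_sym -subr_eq0; apply/negPn/negP => Kn; fold K in Kn.
pose c := fun b => if q b == 0 then 0 else (mu b - q b) ^+ 2 / q b.
pose C := \sum_b c b.
pose S := \sum_b (if q b == 0 then 0 else (q b)^-1).
pose tau := (1 + S)^-1.
have S0 : 0 <= S by apply: sumr_ge0 => b _; case: ifP => // _; rewrite invr_ge0.
have taup : 0 < tau by rewrite invr_gt0; lra.
have tau1 : tau <= 1 by rewrite invr_le1 ?unitf_gt0; lra.
have c0 : forall b, 0 <= c b.
  move=> b; rewrite /c; case: ifP => // _; apply: divr_ge0; [exact: sqr_ge0 | exact: q0].
have C0 : 0 <= C by exact: sumr_ge0.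
have tauq : forall b, q b != 0 -> tau <= q b.
  move=> b qb; have qp : 0 < q b by rewrite lt0r qb q0.
  have h : (q b)^-1 <= 1 + S.
    rewrite /S (bigD1 b) //= (negPf qb).
    have : 0 <= \sum_(i | i != b) (if q i == 0 then 0 else (q i)^-1).
      by apply: sumr_ge0 => i _; case: ifP => // _; rewrite invr_ge0.
    lra.
  rewrite /tau -[q b]invrK lef_pV2 ?posrE ?invr_gt0 //; lra.
pose s := Order.min (2 * C + 2)^-1 (tau / (`|K| + 1)).
pose t := K * s.
have sp0 : 0 < s.
  rewrite lt_min; apply/andP; split; first by rewrite invr_gt0; lra.
  apply: divr_gt0 => //; have := normr_ge0 K; lra.
have sC : s * (2 * C + 2) <= 1.
  have : s <= (2 * C + 2)^-1 by rewrite ge_min lexx.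
  move=> h; have p2 : 0 <= 2 * C + 2 by lra.
  apply: le_trans (ler_wpM2r p2 h) _; rewrite mulVf // gt_eqF //; lra.
have tabs : `|t| <= tau.
  have : s <= tau / (`|K| + 1) by rewrite ge_min lexx orbT.
  move=> h; rewrite /t normrM (gtr0_norm sp0).
  have Kp : 0 < `|K| + 1 by have := normr_ge0 K; lra.
  have : `|K| * s <= `|K| * (tau / (`|K| + 1)) by apply: ler_wpM2l.
  have -> : `|K| * (tau / (`|K| + 1)) = tau - tau / (`|K| + 1) by field; rewrite gt_eqF.
  have : 0 <= tau / (`|K| + 1) by apply: divr_ge0; lra.
  lra.
have r0 : forall b, 0 <= rline q mu t b.
  move=> b; rewrite ffunE; case: (eqVneq (q b) 0) => [qb | qb].
    have : mu b = 0 by apply/eqP; apply/negPn/negP => /(sp b); rewrite qb eqxx.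
    by move=> ->; rewrite qb; lra.
  have h1 := tauq b qb; have h2 := dist_le1 b dm; have h3 := m0 b; have h4 := q0 b.
  have h5 := ler_norm t; have h6 := ler_norm (- t); rewrite normrN in h6.
  case: (lerP 0 t) => ht.
    have -> : q b + t * (mu b - q b) = (1 - t) * q b + t * mu b by ring.
    apply: addr_ge0; apply: mulr_ge0 => //; lra.
  have : 0 <= t * (mu b - 1) by rewrite mulr_le0 //; [exact: ltW | lra].
  have : 0 <= - t * q b by rewrite mulr_ge0 //; lra.
  lra.
have rne : rline q mu t != q.
  apply/negP => /eqP eq; move/negP: (Kn); apply; apply/eqP.
  have tn : t != 0 by rewrite mulf_neq0 // lt0r_neq0.
  have emu : mu = q.
    apply/ffunP => b; move: (congr1 (fun f : FF => f b) eq); rewrite ffunE => /eqP.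
    rewrite -subr_eq0 addrC addKr mulf_eq0 (negPf tn) /= subr_eq0 => /eqP //.
  by rewrite /K emu subrr.
have hs := strict_line dm me r0 rne.
have hb := line_bound (conj q0 q1) r0 dm.
have pw : forall b, - (t ^+ 2 * c b) <= gterm q mu t b.
  move=> b; rewrite /gterm /c; case: eqP => qb //.
  have : mu b = 0 by apply/eqP; apply/negPn/negP => /(sp b); rewrite qb eqxx.
  by move=> ->; rewrite /phi !(mulr0, logc0, oppr0, addr0).
have sg : - (t ^+ 2 * C) <= \sum_b gterm q mu t b.
  apply: le_trans (ler_sum _ (fun b _ => pw b)).
  by rewrite mulr_sumr sumrN.
have : t * K - t ^+ 2 * C <= entropy (rline q mu t) - entropy q.
  apply: le_trans hb; rewrite /K; lra.
have : 0 < t * K - t ^+ 2 * C.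
  have -> : t * K - t ^+ 2 * C = K ^+ 2 * s * (1 - s * C) by rewrite /t; ring.
  have K2 : 0 < K ^+ 2 by rewrite lt0r sqrf_eq0 Kn sqr_ge0.
  apply: mulr_gt0; first exact: mulr_gt0.
  lra.
lra.
Qed.

Lemma gibbs (qs q' : FF) : is_dist qs -> is_dist q' -> supp_sub q' qs ->
  Elog q' qs = Elog qs qs -> q' != qs -> entropy q' < entropy qs.
Proof.
move=> [s0 s1] [p0 p1] sp el ne.
have : ~~ [forall b, q' b == qs b].
  by apply: contra ne => /forallP h; apply/eqP/ffunP => b; apply/eqP.
rewrite negb_forall => /existsP [b hb].
have pw : forall a, q' a * (logc (qs a) - logc (q' a)) <= qs a - q' a.
  by move=> a; case: (G (p0 a) (s0 a) (sp a)).
have pb : q' b * (logc (qs b) - logc (q' b)) < qs b - q' b.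
  by case: (G (p0 b) (s0 b) (sp b)) => _; apply.
have hs : \sum_a q' a * (logc (qs a) - logc (q' a)) < \sum_a (qs a - q' a).
  rewrite (bigD1 b) //= [X in _ < X](bigD1 b) //=.
  apply: ltr_leD => //; apply: ler_sum => a _; exact: pw.
rewrite sumrB s1 p1 subrr in hs.
have e : \sum_a q' a * (logc (qs a) - logc (q' a)) = Elog q' qs - Elog q' q'.
  by rewrite /Elog -sumrB; apply: eq_bigr => a _; ring.
rewrite e el in hs; rewrite /entropy; lra.
Qed.
End Game.
End Aux.

Unset Implicit Arguments.

Theorem corollary1 (R : realType) (N : finType) (Act : N -> finType)
    (u : N -> profile Act -> R) (qstar : {ffun profile Act -> R}) :
  CE u qstar ->
  (forall p : {ffun profile Act -> R}, CE u p -> p = qstar) ->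
  (forall mu : {ffun profile Act -> R}, Iset u mu <-> Iq qstar mu) /\
  (forall mu : {ffun profile Act -> R},
     directly_implementable u mu <->
     (is_dist mu /\ supp_sub mu qstar /\ Elog mu qstar = Elog qstar qstar)).
Proof.
move=> ceq uq; split => mu; split.
- by move=> [q [cq iq]]; rewrite -(uq q cq).
- by move=> iq; exists qstar.
- move=> [dm [F [q [me ob]]]].
  have cq : CE u q by split => //; case: me => [[]].
  have e := uq q cq; subst q.
  split => //; split; [exact: supp_part dm me | exact: elog_part dm me].
- move=> [dm [sp el]]; split => //.
  pose f1 := fun a : profile Act => logc (qstar a).
  pose f2 := fun a : profile Act => if qstar a == 0 then (1:R) else 0.
  exists (fun f => f = f1 \/ f = f2), qstar; split; last by case: ceq.
  have [[s0 s1] _] := ceq.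
  have mu2 : \sum_a mu a * f2 a = 0.
    apply: big1 => a _; rewrite /f2; case: eqP => [qa|]; last by rewrite mulr0.
    by rewrite mulr1; apply/eqP; apply/negPn/negP => /(sp a); rewrite qa eqxx.
  have q2 : \sum_a qstar a * f2 a = 0.
    by apply: big1 => a _; rewrite /f2; case: eqP => [->|]; rewrite ?mul0r ?mulr0.
  split.
    split; first by split.
    by move=> f [->|->]; [exact: esym el | rewrite mu2 q2].
  move=> q' [dq' hF] ne; apply: gibbs; [by split | exact: dq' | | | exact: ne].
    move=> a qa; apply/negP => /eqP sa.
    have h := hF f2 (or_intror erefl); rewrite mu2 in h.
    have hz : q' a * f2 a = 0.
      apply: (psumr_eq0P _ h) => // i _; rewrite /f2; case: ifP; rewrite ?mulr1 ?mulr0 //.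
      by case: dq'.
    by move: hz; rewrite /f2 sa eqxx mulr1 => /eqP; rewrite (negPf qa).
  by rewrite -el; exact: (hF f1 (or_introl erefl)).
Qed.
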